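(* Let $q\ge 7$ and $s\in[1,7]$ be integers, $C$ a finite set with $|C|=2q+s$, and $M\in\mathcal M(6,q,C)$. Then: (1) $c_1=0$; (2) $c_l=0$ for all $l\ge 7$; (3) $c_2\ge 3s$; (4) $c_{3+}\le 2q-2s$; (5) $\sum_{i=3}^6 i\,c_i\le 6q-6s$; (6) $\operatorname{frq}(M)=2$; (7) $\operatorname{exc}(M)=7-s$; (8) $c_{4+}\le c_2-3s$; (9) for every two-element set $\{i,k\}\subseteq\{1,\dots,6\}$, $r(i,k)\le 8-s$.
   Context: $\mathcal M(6,q,C)$ is the set of $6\times q$ matrices $M$ with entries from $C$ such that each row has $q$ pairwise distinct entries, each column has $6$ pairwise distinct entries, and every pair of distinct colours of $C$ appears together in some row or some column of $M$. The frequency of a colour is the number of entries of $M$ equal to it; $\operatorname{frq}(M)$ is the minimum frequency over $C$. $C_l$ is the set of colours of frequency $l$, $c_l=|C_l|$; $C_{l+}$ is the set of colours of frequency at least $l$, $c_{l+}=|C_{l+}|$. The excess of a colour $\gamma$ of frequency $l$ is $\operatorname{exc}(\gamma)=l(6+q-l-1)-(|C|-1)$, and $\operatorname{exc}(M)$ is the minimum excess over $C$. For rows $i\ne k$, $r(i,k)$ is the number of colours of frequency $2$ appearing in both row $i$ and row $k$. *)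

(* Defs.v *)
From mathcomp Require Import all_boot all_order all_algebra.
Set Implicit Arguments. Unset Strict Implicit. Unset Printing Implicit Defensive.
Import Order.TTheory GRing.Theory Num.Theory.
Local Open Scope ring_scope.

Definition inM (q : nat) (C : finType) (M : 'M[C]_(6, q)) : Prop :=
  (forall (i : 'I_6) (j1 j2 : 'I_q), M i j1 = M i j2 -> j1 = j2) /\
  (forall (j : 'I_q) (i1 i2 : 'I_6), M i1 j = M i2 j -> i1 = i2) /\
  (forall a b : C, a <> b ->
     (exists (i : 'I_6) (j1 j2 : 'I_q), M i j1 = a /\ M i j2 = b) \/
     (exists (j : 'I_q) (i1 i2 : 'I_6), M i1 j = a /\ M i2 j = b)).

Definition freq (q : nat) (C : finType) (M : 'M[C]_(6, q)) (a : C) : nat := (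
  #|[set p : 'I_6 * 'I_q | M p.1 p.2 == a]|)%N.

Definition cnt (q : nat) (C : finType) (M : 'M[C]_(6, q)) (l : nat) : nat := (
  #|[set a : C | freq M a == l]|)%N.
Definition cnt_ge (q : nat) (C : finType) (M : 'M[C]_(6, q)) (l : nat) : nat := (
  #|[set a : C | (l <= freq M a)%N]|)%N.

Definition exc (q : nat) (C : finType) (M : 'M[C]_(6, q)) (a : C) : int :=
  ((freq M a)%:Z * (6%:Z + q%:Z - (freq M a)%:Z - 1) - (#|C|%:Z - 1))%R.

Definition minimum_of (T : finType) (f : T -> int) (m : int) : Prop :=
  (exists a, f a = m) /\ (forall a, m <= f a).

Definition frq_is (q : nat) (C : finType) (M : 'M[C]_(6, q)) (m : nat) : Prop :=
  minimum_of (fun a => (freq M a)%:Z) m%:Z.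
Definition exc_is (q : nat) (C : finType) (M : 'M[C]_(6, q)) (m : int) : Prop :=
  minimum_of (exc M) m.

Definition in_row (q : nat) (C : finType) (M : 'M[C]_(6, q)) (i : 'I_6) (a : C) : bool :=
  [exists j : 'I_q, M i j == a].

Definition rr (q : nat) (C : finType) (M : 'M[C]_(6, q)) (i k : 'I_6) : nat := (
  #|[set a : C | [&& (freq M a == 2)%N, in_row M i a & in_row M k a]]|)%N.

(* Main.v *)
Require Import Defs.
From mathcomp Require Import all_boot all_order all_algebra.
From mathcomp Require Import zify.
Lemma card_sum (T : finType) (P : pred T) : #|[set x | P x]| = \sum_x (P x : nat).
Proof.
rewrite -sum1_card big_mkcond /=; apply: eq_bigr => x _; rewrite inE; by case: (P x).
Qed.

Lemma freq_sum (q : nat) (C : finType) (M : 'M[C]_(6, q)) :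
  \sum_a freq M a = 6 * q.
Proof.
rewrite /freq.
under eq_bigr => a _ do rewrite card_sum.
rewrite exchange_big /=.
transitivity #|[set: 'I_6 * 'I_q]|; last by rewrite cardsT card_prod !card_ord.
rewrite -sum1_card.
apply: eq_big => [p|p _]; first by rewrite inE.
rewrite (bigD1 (M p.1 p.2)) //= eqxx big1 // => b /negPf.
by rewrite eq_sym => ->.
Qed.

Section Cover.
Variables (q : nat) (C : finType) (M : 'M[C]_(6, q)).
Hypothesis HM : inM M.

Let f (p : 'I_6 * 'I_q) := M p.1 p.2.

Lemma freq_le6 a : (freq M a <= 6)%N.
Proof.
case: HM => Hr [Hc _].
have := max_card [set p.1 | p in [set p : 'I_6 * 'I_q | M p.1 p.2 == a]].
rewrite card_ord card_in_imset //.
move=> [i1 j1] [i2 j2]; rewrite !inE /= => /eqP E1 /eqP E2 Ei; subst i2.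
by rewrite (Hr i1 j1 j2 (etrans E1 (esym E2))).
Qed.

Lemma freq_leq a : (freq M a <= q)%N.
Proof.
case: HM => Hr [Hc _].
have := max_card [set p.2 | p in [set p : 'I_6 * 'I_q | M p.1 p.2 == a]].
rewrite card_ord card_in_imset //.
move=> [i1 j1] [i2 j2]; rewrite !inE /= => /eqP E1 /eqP E2 Ej; subst j2.
by rewrite (Hc j1 i1 i2 (etrans E1 (esym E2))).
Qed.

Lemma cover a (i k : 'I_6) (D : {set C}) :
  i != k ->
  (forall d, d \in D -> [&& d != a, in_row M i d, in_row M k d, in_row M i a & in_row M k a]) ->
  (#|C| - 1 + #|D| <= 6 * q - (6 - freq M a) * (q - freq M a) - freq M a)%N.
Proof.
move=> ik HD.
case: HM => Hr [Hc Hcov].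
set A := [set p : 'I_6 * 'I_q | M p.1 p.2 == a].
set R := [set p.1 | p in A].
set K := [set p.2 | p in A].
have cR : #|R| = freq M a.
  rewrite /freq -/A card_in_imset //.
  move=> [i1 j1] [i2 j2]; rewrite !inE /= => /eqP E1 /eqP E2 Ei; subst i2.
  by rewrite (Hr i1 j1 j2 (etrans E1 (esym E2))).
have cK : #|K| = freq M a.
  rewrite /freq -/A card_in_imset //.
  move=> [i1 j1] [i2 j2]; rewrite !inE /= => /eqP E1 /eqP E2 Ej; subst j2.
  by rewrite (Hc j1 i1 i2 (etrans E1 (esym E2))).
have inR i0 j0 : M i0 j0 = a -> i0 \in R.
  by move=> E; apply/imsetP; exists (i0, j0) => //; rewrite inE E.
have inK i0 j0 : M i0 j0 = a -> j0 \in K.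
  by move=> E; apply/imsetP; exists (i0, j0) => //; rewrite inE E.
have rowR i0 : in_row M i0 a -> i0 \in R.
  by move=> /existsP [j0 /eqP E]; exact: inR E.
set U := ~: setX (~: R) (~: K).
have cU : #|U| = 6 * q - (6 - freq M a) * (q - freq M a).
  rewrite cardsCs setCK cardsX card_prod !card_ord.
  have -> : #|~: R| = 6 - freq M a by have := cardsC R; rewrite card_ord cR; lia.
  have -> : #|~: K| = q - freq M a by have := cardsC K; rewrite card_ord cK; lia.
  done.
have AU : A \subset U.
  apply/subsetP => p; rewrite !inE => /eqP E.
  by rewrite (inR p.1 p.2 E).
set S := U :\: A.
have cS : #|S| = #|U| - freq M a by rewrite /S cardsDS.
set T := [set p : 'I_6 * 'I_q | (p.1 == k) && (M p.1 p.2 \in D)].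
have TS : T \subset S.
  apply/subsetP => -[i0 j0]; rewrite !inE /= => /andP [/eqP -> Hd].
  have /and5P [da _ _ _ ka] := HD _ Hd.
  by rewrite (rowR _ ka) /= andbT; apply: contra da => /eqP ->.
have cT : #|T| = #|D|.
  have -> : D = [set M p.1 p.2 | p in T].
    apply/setP => d; apply/idP/imsetP.
      move=> Hd; have /and5P [_ _ /existsP [j0 /eqP E] _ _] := HD _ Hd.
      by exists (k, j0) => //; rewrite inE /= eqxx E.
    by move=> [p]; rewrite inE => /andP [_ Hd] ->.
  rewrite card_in_imset //.
  move=> [i1 j1] [i2 j2]; rewrite !inE /= => /andP [/eqP E1 _] /andP [/eqP E2 _] E.
  subst i1 i2; by rewrite (Hr k j1 j2 E).
have cov : [set~ a] \subset [set M p.1 p.2 | p in S :\: T].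
  apply/subsetP => b; rewrite !inE => ba.
  have [p pS Mp] : exists2 p, p \in S & M p.1 p.2 = b.
    have ab : a <> b by move=> E; rewrite E eqxx in ba.
    case: (Hcov a b ab) => [[i0 [j1 [j2 [E1 E2]]]] | [j0 [i1 [i2 [E1 E2]]]]].
      exists (i0, j2) => //; rewrite !inE /= (inR _ _ E1) /= E2 ba //.
    by exists (i2, j0) => //; rewrite !inE /= (inK _ _ E1) E2 ba /= andbF.
  apply/imsetP.
  case pT: (p \in T); last by exists p; rewrite // in_setD pT.
  move: pT; rewrite inE Mp => /andP [_ Hd].
  have /and5P [_ /existsP [j0 /eqP E] _ ia _] := HD _ Hd.
  exists (i, j0) => //.
  rewrite !inE /= E (negbTE ik) /= (rowR _ ia) /=.
  by move: ba; rewrite eq_sym => ->.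
have H1 := subset_leq_card cov.
have H2 := leq_imset_card (fun p : 'I_6 * 'I_q => M p.1 p.2) (S :\: T).
rewrite cardsDS // cT in H2. have cC : #|[set~ a]| = #|C| - 1 by rewrite cardsC1 subn1.
rewrite cC in H1.
have H3 := subset_leq_card TS. rewrite cT cS cU in H3 H2.
move: H1 H2 H3; move: (6 * q - _) => X.
move: (X - _) => Y. move: #|D| => dd. move: (#|C|) => cc. move: #|[set _ | _ in _]| => zz. lia.
Qed.
End Cover.

Lemma sumC (C : finType) : \sum_(a : C) 1 = #|C|.
Proof. by rewrite sum1_card. Qed.

Theorem claim1 (q s : nat) (C : finType) (M : 'M[C]_(6, q)) :
  7 <= q -> 1 <= s <= 7 -> #|C| = 2 * q + s -> inM M ->
  cnt M 1 = 0 /\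
      (forall l, 7 <= l -> cnt M l = 0) /\
      3 * s <= cnt M 2 /\
      cnt_ge M 3 <= 2 * q - 2 * s /\
      \sum_(3 <= i < 7) i * cnt M i <= 6 * q - 6 * s /\
      frq_is M 2 /\
      exc_is M (7%:Z - s%:Z)%R /\
      cnt_ge M 4 + 3 * s <= cnt M 2 /\
    (forall i k : 'I_6, i != k -> rr M i k <= 8 - s).
Proof.
move=> hq hs hC HM.
have i01 : (ord0 : 'I_6) != (@Ordinal 6 1 isT) by [].
have fb a : 2 <= freq M a <= 6.
  have H := cover _ _ _ HM a _ _ set0 i01.
  have {H} := H (fun d (hd : d \in set0) => ltac:(by rewrite inE in hd)).
  rewrite cards0 hC.
  have := freq_le6 _ _ _ HM a; have := freq_leq _ _ _ HM a.
  move: (freq M a) => l.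
  case: l => [|[|l]] //=; try lia.
have cntE l : cnt M l = \sum_a (freq M a == l : nat) by rewrite /cnt card_sum.
have cntgE l : cnt_ge M l = \sum_a (l <= freq M a : nat) by rewrite /cnt_ge card_sum.
have hsum := freq_sum _ _ M.
have hcard := sumC C.
have P2 : cnt M 2 + cnt_ge M 3 = #|C|.
  rewrite cntE cntgE -big_split -hcard; apply: eq_bigr => a _.
  have := fb a; move: (freq M a) => l; case: l => [|[|[|l]]] //=.
have P1 : cnt_ge M 3 + cnt_ge M 4 + 2 * #|C| <= 6 * q.
  rewrite !cntgE -hcard big_distrr -!big_split -hsum /=; apply: leq_sum => a _.
  have := fb a; move: (freq M a) => l; case: l => [|[|[|[|l]]]] //=; lia.
have P3 : \sum_(3 <= i < 7) i * cnt M i + 2 * cnt M 2 = 6 * q.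
  do 4 rewrite big_nat_recr //=.
  rewrite big_geq // add0n !cntE !big_distrr -!big_split -hsum /=.
  apply: eq_bigr => a _.
  have := fb a; move: (freq M a) => l.
  case: l => [|[|[|[|[|[|[|l]]]]]]] //=; lia.
move: P1 P2 P3; rewrite hC => P1 P2 P3.
have c2 : 3 * s <= cnt M 2 by lia.
have [a0 a02] : exists a, freq M a = 2.
  have : 0 < cnt M 2 by lia.
  rewrite /cnt card_gt0 => /set0Pn [a]; rewrite inE => /eqP ha; by exists a.
split.
  rewrite cntE big1 // => a _; have := fb a; move: (freq M a) => l.
  case: l => [|[|l]] //=.
split.
  move=> l hl; rewrite cntE big1 // => a _; have := fb a; move: (freq M a) => l'.
  move=> H; apply/eqP; rewrite eqb0; apply/eqP => E; lia.
split; first done.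
split; first lia.
split; first lia.
split.
  split; first by exists a0; rewrite a02.
  by move=> a; rewrite lez_nat; case/andP: (fb a).
split.
  split.
    exists a0; rewrite /exc a02 hC; lia.
  move=> a; rewrite /exc hC; have := fb a; move: (freq M a) => l.
  case: l => [|[|[|[|[|[|[|l]]]]]]] //= _; lia.
split; first lia.
move=> i k ik; rewrite /rr.
set Rs := [set a | _].
have [->|/set0Pn [a Ha]] := eqVneq Rs set0; first by rewrite cards0.
move: (Ha); rewrite inE => /and3P [/eqP fa ia ka].
have := cover _ _ _ HM a _ _ (Rs :\ a) ik.
have HD : forall d, d \in Rs :\ a -> [&& d != a, in_row M i d, in_row M k d, in_row M i a & in_row M k a].
  move=> d; rewrite !inE => /andP [da /and3P [_ id kd]]; by rewrite da id kd ia ka.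
move=> /(_ HD); rewrite fa hC (cardsD1 a Rs) Ha.
move: #|Rs :\ a| => n.
lia.
Qed.
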